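(* Let $q=p^a$ with $p$ prime, let $G\le GL(V)=GL_d(q)$ be $p$-exceptional with $C_V(O^{p'}(G))=0$, let $t\in G$ have order $p$, and let $P$ be a Sylow $p$-subgroup of $G$. Then: (i) $d\le r_p\log_q|G:N_G(P)|$, where $r_p$ is the minimal number of $G$-conjugates of $P$ that generate $O^{p'}(G)$; (ii) $|V|\le |C_V(t)|\cdot|t^G|$; (iii) if $O^{p'}(G)$ is generated by $\alpha$ conjugates of $t$, then $q^{d/\alpha}\le|t^G|$.
   Context: $G\le GL_d(q)$ is $p$-exceptional if $p$ divides $|G|$ and every orbit of $G$ on $V=\mathbb{F}_q^d$ has size coprime to $p$. $O^{p'}(G)$ is the subgroup generated by all $p$-elements of $G$. $C_V(X)$ is the subspace of vectors fixed by all elements of $X$; $t^G$ is the conjugacy class of $t$ in $G$. *)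

(* Defs.v *)
From HB Require Import structures.
From mathcomp Require Import all_boot all_order all_algebra all_fingroup all_solvable all_field all_character.
Set Implicit Arguments. Unset Strict Implicit. Unset Printing Implicit Defensive.
Import GRing.Theory.
Local Open Scope group_scope.

(* G <= GL_n(F) is modelled by a faithful matrix representation rG of an
   abstract finite group G over the finite field F; V = 'rV[F]_n, with
   g acting on row vectors by v |-> v *m rG g. *)

Section Defs.
Variables (F : finFieldType) (gT : finGroupType) (G : {group gT}) (n : nat).
Variable rG : mx_representation F G n.

Definition vorbit (v : 'rV[F]_n) : {set 'rV[F]_n} :=
  [set (v *m rG g)%R | g in G].

Definition p_exceptional (p : nat) : Prop :=
  p %| #|G| /\ forall v : 'rV[F]_n, coprime #|vorbit v| p.

Definition fixV (X : {set gT}) : {set 'rV[F]_n} :=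
  [set v : 'rV[F]_n | [forall x in X, (v *m rG x)%R == v]].
End Defs.

Definition Opp (gT : finGroupType) (p : nat) (G : {set gT}) : {group gT} :=
  <<[set x in G | p.-elt x]>>%G.

Definition gen_by_conj_groups (gT : finGroupType) (G P H : {set gT}) (r : nat) : bool :=
  [exists s : {ffun 'I_r -> gT},
     [forall i, s i \in G] && (<<\bigcup_(i < r) (P :^ s i)>> == H)].

Definition gen_by_conj_elts (gT : finGroupType) (G H : {set gT}) (t : gT) (r : nat) : bool :=
  [exists s : {ffun 'I_r -> gT},
     [forall i, s i \in G] && (<<[set t ^ s i | i : 'I_r]>> == H)].

(* Main.v *)
Require Import Defs.
From HB Require Import structures.
From mathcomp Require Import all_boot all_order all_algebra all_fingroup all_solvable all_field all_character.
From mathcomp Require Import zify.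
Set Implicit Arguments. Unset Strict Implicit. Unset Printing Implicit Defensive.
Import GRing.Theory.
Local Open Scope group_scope.

Lemma card_bigcup_le (T I : finType) (A : {pred I}) (B : I -> {set T}) :
  (#|\bigcup_(i in A) B i| <= \sum_(i in A) #|B i|)%N.
Proof.
elim/big_rec2: _ => [|i k S Ai h]; first by rewrite cards0.
apply: leq_trans (leq_card_setU _ _) _; exact: leq_add.
Qed.

Lemma arith q d c N r : (0 < q)%N -> (c <= d)%N -> (q ^ d <= N * q ^ c)%N ->
  (d <= r * (d - c))%N -> (q ^ d <= N ^ r)%N.
Proof.
move=> q0 cd h1 h2.
have h3 : (q ^ (d - c) <= N)%N.
  by have := h1; rewrite -{1}(subnK cd) expnD leq_pmul2r ?expn_gt0 ?q0.
apply: (leq_trans (leq_pexp2l q0 h2)).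
rewrite mulnC expnM; case: r {h2} => [|r]; first by [].
by rewrite leq_exp2r.
Qed.

Section Rep.
Variables (F : finFieldType) (gT : finGroupType) (G : {group gT}) (d : nat).
Variable rG : mx_representation F G d.

Lemma fixV_rowg (X : {set gT}) : fixV rG X = rowg (rfix_mx rG X).
Proof.
apply/setP=> v; rewrite !inE; apply/forallP/rfix_mxP => h x.
  by move=> Xx; have := h x; rewrite Xx => /eqP.
by apply/implyP=> Xx; rewrite h.
Qed.

Lemma card_fixV (X : {set gT}) : #|fixV rG X| = (#|F| ^ \rank (rfix_mx rG X))%N.
Proof. by rewrite fixV_rowg card_rowg. Qed.

Lemma rank_fix_conj (X : {set gT}) g : g \in G -> X \subset G ->
  \rank (rfix_mx rG (X :^ g)) = \rank (rfix_mx rG X).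
Proof.
by move=> Gg sXG; rewrite (rfix_mx_conjsg rG Gg sXG) mxrankMfree // repr_mx_free.
Qed.

Lemma rank_bigcap r (A : 'I_r -> 'M[F]_d) :
  (d <= \rank (\bigcap_(i < r) A i)%MS + \sum_(i < r) (d - \rank (A i)))%N.
Proof.
elim: r A => [|r IH] A.
  by rewrite !big_ord0 mxrank1 addn0.
rewrite !big_ord_recr /=.
set B := (\bigcap_(i < r) A (widen_ord (leqnSn r) i))%MS.
have := IH (fun i => A (widen_ord (leqnSn r) i)) => /=; rewrite -/B => h.
have hs := mxrank_sum_cap B (A ord_max).
have hr : (\rank (B + A ord_max)%MS <= d)%N by apply: rank_leq_col.
have hA : (\rank (A ord_max) <= d)%N by apply: rank_leq_col.
lia.
Qed.


Lemma card_fixV_conj (X : {set gT}) g : g \in G -> X \subset G ->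
  #|fixV rG (X :^ g)| = #|fixV rG X|.
Proof. by move=> Gg sXG; rewrite !card_fixV rank_fix_conj. Qed.

Lemma cover p (P : {group gT}) : prime p -> p_exceptional rG p ->
  p.-Sylow(G) P -> forall v, exists2 x, x \in G & v \in fixV rG (P :^ x).
Proof.
move=> pr [_ hex] sylP v.
have Ov : vorbit rG v = orbit ('MR rG)%act G v.
  rewrite /vorbit /orbit; apply: eq_in_imset => g Gg /=.
  by rewrite mx_repr_actE.
pose S := 'C_G[v | 'MR rG].
have cS : coprime #|G : S| p by rewrite /S -card_orbit_in ?subxx // -Ov.
have [Q sylQ] := Sylow_exists p [group of S].
have sSG : S \subset G := subsetIl _ _.
have sylQG : p.-Sylow(G) Q.
  rewrite pHallE (subset_trans (pHall_sub sylQ) sSG) (card_Hall sylQ) /=.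
  rewrite -(Lagrange sSG) partnM ?cardG_gt0 ?indexg_gt0 //.
  rewrite (@part_p'nat _ #|G : S|) ?muln1 //.
  by rewrite p'natE // -prime_coprime // coprime_sym.
have [x Gx defQ] := Sylow_trans sylP sylQG.
exists x => //; rewrite inE; apply/forallP => y; apply/implyP => Py.
have : y \in S by rewrite (subsetP (pHall_sub sylQ)) // defQ.
rewrite !inE; case/andP => Gy; case/andP=> _ /subsetP/(_ v (set11 v)); rewrite inE /= mx_repr_actE //.
Qed.


Lemma zero_cap (H Y : {set gT}) r (X : 'I_r -> {set gT}) :
  H \subset G -> fixV rG H = [set 0%R] -> (forall i, X i \subset G) ->
  (forall y, y \in Y -> exists i, y \in X i) -> H \subset <<Y>> ->
  \rank (\bigcap_(i < r) rfix_mx rG (X i))%MS = 0.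
Proof.
move=> sHG fixH sXG hY sHY.
set W := (\bigcap_(i < r) rfix_mx rG (X i))%MS.
have sYW : Y \subset rstab rG W.
  apply/subsetP => y /hY [i Xiy].
  have : X i \subset rstab rG W.
    rewrite rfix_mx_rstabC //; have := submx_refl W; rewrite {2}/W => /sub_bigcapmxP; exact.
  by move/subsetP; apply.
have sHW : H \subset rstab rG W.
  by apply: subset_trans sHY _; rewrite gen_subG.
have : (rowg W \subset fixV rG H).
  by rewrite fixV_rowg rowgS -rfix_mx_rstabC.
move/subset_leq_card; rewrite fixH cards1 card_rowg.
have F1 : (1 < #|F|)%N.
  by apply/card_gt1P; exists 0%R, 1%R; rewrite ?inE // eq_sym oner_eq0.
case: (\rank W) => // k; rewrite expnS => h.
have := expn_gt0 #|F| k; rewrite (ltn_trans _ F1) //= => hk.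
nia.
Qed.

End Rep.

Unset Implicit Arguments.
Set Strict Implicit.

Theorem lemma2p4 (F : finFieldType) (p : nat) (gT : finGroupType)
    (G : {group gT}) (d : nat) (rG : mx_representation F G d)
    (t : gT) (P : {group gT}) :
  prime p -> (p \in [pchar F])%R ->
  mx_faithful rG ->
  p_exceptional rG p ->
  fixV rG (Opp p G) = [set 0%R] ->
  t \in G -> #[t] = p ->
  P \in 'Syl_p(G) ->
  (forall r : nat,
      gen_by_conj_groups G P (Opp p G) r ->
      (forall r', gen_by_conj_groups G P (Opp p G) r' -> r <= r')%N ->
      (#|F| ^ d <= #|G : 'N_G(P)| ^ r)%N)
  /\ (#|[set: 'rV[F]_d]| <= #|fixV rG [set t]| * #|t ^: G|)%N
  /\ (forall alpha : nat, gen_by_conj_elts G (Opp p G) t alpha ->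
        (#|F| ^ d <= #|t ^: G| ^ alpha)%N).
Proof.
move=> pr _ _ pex fixO Gt ot sylPin.
have sylP : p.-Sylow(G) P by move: sylPin; rewrite inE.
have q0 : (0 < #|F|)%N by apply/card_gt0P; exists 0%R.
have sPG := pHall_sub sylP.
have sOG : Opp p G \subset G.
  by rewrite /Opp gen_subG; apply/subsetP => x; rewrite inE => /andP[].
have cardV : #|[set: 'rV[F]_d]| = (#|F| ^ d)%N by rewrite cardsT card_mx mul1n.
have hii : (#|[set: 'rV[F]_d]| <= #|fixV rG [set t]| * #|t ^: G|)%N.
  have sub : [set: 'rV[F]_d] \subset \bigcup_(u in t ^: G) fixV rG [set u].
    apply/subsetP => v _.
    have [x Gx vfix] := cover pr pex sylP v.
    have pt : p.-group <[t]> by rewrite /pgroup -orderE ot pnat_id.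
    have sT : <[t]> \subset G by rewrite cycle_subG.
    have [y Gy sty] := Sylow_Jsub sylP sT pt.
    have tyP : t ^ y \in P by rewrite (subsetP sty) // memJ_conjg cycle_id.
    apply/bigcupP; exists (t ^ (y * x)).
      by apply/imsetP; exists (y * x); rewrite ?groupM.
    rewrite inE; apply/forallP => z; apply/implyP; rewrite inE => /eqP ->.
    move: vfix; rewrite inE => /forallP /(_ (t ^ (y * x))).
    by rewrite conjgM memJ_conjg tyP.
  apply: (leq_trans (subset_leq_card sub)).
  apply: (leq_trans (card_bigcup_le (t ^: G) (fun u => fixV rG [set u]))).
  rewrite (eq_bigr (fun _ => #|fixV rG [set t]|)); last first.
    move=> u /imsetP [g Gg ->].
    by rewrite -conjg_set1 card_fixV_conj // sub1set.
  by rewrite sum_nat_const mulnC.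
split.
  move=> r gen _.
  pose c := \rank (rfix_mx rG P).
  have hcov : (#|F| ^ d <= #|G : 'N_G(P)| * #|F| ^ c)%N.
    rewrite -cardV.
    have sub : [set: 'rV[F]_d] \subset \bigcup_(Q in P :^: G) fixV rG Q.
      apply/subsetP => v _; have [x Gx vf] := cover pr pex sylP v.
      by apply/bigcupP; exists (P :^ x) => //; apply/imsetP; exists x.
    apply: (leq_trans (subset_leq_card sub)).
    apply: (leq_trans (card_bigcup_le (P :^: G) (fun Q => fixV rG Q))).
    rewrite (eq_bigr (fun _ => (#|F| ^ c)%N)); last first.
      by move=> Q /imsetP [g Gg ->]; rewrite card_fixV_conj // card_fixV.
    by rewrite sum_nat_const card_conjugates.
  move: gen => /existsP [s /andP [/forallP sG /eqP gen]].
  have sXG : forall i, P :^ s i \subset G.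
    by move=> i; rewrite conj_subG ?sG.
  have hY : forall y, y \in \bigcup_(i < r) P :^ s i -> exists i, y \in P :^ s i.
    by move=> y /bigcupP [i _ yi]; exists i.
  have sOY : Opp p G \subset <<\bigcup_(i < r) P :^ s i>> by rewrite gen.
  have h0 := zero_cap sOG fixO sXG hY sOY.
  have hd := rank_bigcap (fun i => rfix_mx rG (P :^ s i)).
  rewrite h0 add0n (eq_bigr (fun _ => d - c)%N) in hd; last first.
    by move=> i _; rewrite rank_fix_conj ?sG.
  rewrite sum_nat_const card_ord in hd.
  exact: (arith q0 (rank_leq_col _) hcov hd).
split=> // alpha /existsP [s /andP [/forallP sG /eqP gen]].
pose c := \rank (rfix_mx rG [set t]).
have hcov : (#|F| ^ d <= #|t ^: G| * #|F| ^ c)%N.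
  by rewrite -cardV mulnC -card_fixV.
have sXG : forall i, [set t ^ s i] \subset G.
  by move=> i; rewrite sub1set groupJ ?sG.
have hY : forall y, y \in [set t ^ s i | i : 'I_alpha] -> exists i, y \in [set t ^ s i].
  by move=> y /imsetP [i _ ->]; exists i; rewrite set11.
have sOY : Opp p G \subset <<[set t ^ s i | i : 'I_alpha]>> by rewrite gen.
have h0 := zero_cap sOG fixO sXG hY sOY.
have hd := rank_bigcap (fun i => rfix_mx rG [set t ^ s i]).
rewrite h0 add0n (eq_bigr (fun _ => d - c)%N) in hd; last first.
  by move=> i _; rewrite -conjg_set1 rank_fix_conj ?sG ?sub1set.
rewrite sum_nat_const card_ord in hd.
exact: (arith q0 (rank_leq_col _) hcov hd).
Qed.
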